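(* Let $N\in\mathbb N$, $F=\mathbb Z/N\mathbb Z$, $k\in\mathbb N$ and $m_1,\ldots,m_{2k}\in\mathbb N$ with $\sum_{\ell=1}^{2k}m_\ell=N$. Let $\sigma\in G_F$ be the configuration $\sigma=(1)^{m_1}(-1)^{m_2}\cdots(1)^{m_{2k-1}}(-1)^{m_{2k}}$, i.e. reading $\sigma_1,\sigma_2,\ldots,\sigma_N$ one sees $m_1$ entries $1$, then $m_2$ entries $-1$, etc. Then, with indices of the $m_j$ taken in $\mathbb Z/2k\mathbb Z$, \[\Delta A_F(\sigma)=\sum_{\ell=1}^{2k}\sum_{n=1}^{k}\Big(\delta_{m_\ell+\cdots+m_{\ell+2n-2}}-\delta_{m_\ell+\cdots+m_{\ell+2n-1}}\Big).\]
   Context: $G_F=\{-1,1\}^F$ (with $N\equiv0$ in $F$), $A_F(\sigma)_f=\sum_{j\in F}\sigma_j\sigma_{j+f}$, $(\Delta h)_f=\frac14(h_{f-1}-2h_f+h_{f+1})$ for $h\in\mathbb R^F$, and for an integer $x$, $\delta_x\in\mathbb R^F$ is the indicator function of the residue class $x\bmod N$. *)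

(* Defs.v *)
(* F = Z/NZ is represented by 'I_N (N > 0), with cyclic
   arithmetic; functions on F are functions 'I_N -> R. *)
From mathcomp Require Import all_boot all_order all_algebra.
Set Implicit Arguments. Unset Strict Implicit. Unset Printing Implicit Defensive.
Import Order.TTheory GRing.Theory Num.Theory.
Local Open Scope ring_scope.

Lemma addF_subproof (N : nat) (j f : 'I_N) : ((j + f) %% N < N)%N.
Proof. by apply: ltn_pmod; apply: leq_ltn_trans (ltn_ord j). Qed.
Definition addF (N : nat) (j f : 'I_N) : 'I_N := Ordinal (addF_subproof j f).

Definition Acorr (R : ringType) (N : nat) (sigma : 'I_N -> R) : 'I_N -> R :=
  fun f => \sum_(j : 'I_N) sigma j * sigma (addF j f).

Definition Delta (R : fieldType) (N : nat) (h : 'I_N -> R) : 'I_N -> R :=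
  fun f => (h (ord_pred f) - 2 * h f + h (ordS f)) / 4.

Definition delta (R : ringType) (N : nat) (x : nat) : 'I_N -> R :=
  fun f => if (nat_of_ord f == x %% N)%N then 1 else 0.

Definition config_seq (R : ringType) (k : nat) (m : nat -> nat) : seq R :=
  flatten [seq nseq (m l) (if odd l then 1 else -1 : R) | l <- iota 1 k.*2].

(* sigma_1, ..., sigma_N are the successive letters of the word; the element
   i of F = Z/NZ (0 <= i < N) is position i (with position N = 0 in F),
   i.e. the letter of index (i - 1) mod N (0-based) *)
Definition config (R : ringType) (N k : nat) (m : nat -> nat) : 'I_N -> R :=
  fun i => nth 0 (config_seq R k m) ((nat_of_ord i + N.-1) %% N).

(* m with index taken in Z/2kZ (representatives 1..2k) *)
Definition mcyc (k : nat) (m : nat -> nat) (i : nat) : nat :=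
  m ((i.-1 %% k.*2).+1).

Definition msum (k : nat) (m : nat -> nat) (l r : nat) : nat :=
  (\sum_(l <= i < l + r) mcyc k m i)%N.
Arguments msum k m l r : clear implicits.
Arguments mcyc k m i : clear implicits.
Arguments config R N k m i : clear implicits.
Arguments delta R N x f : clear implicits.

(* Main.v *)
Require Import Defs.
From mathcomp Require Import all_boot all_order all_algebra zify ring lra.
Set Implicit Arguments. Unset Strict Implicit. Unset Printing Implicit Defensive.
Import Order.TTheory GRing.Theory Num.Theory.
Local Open Scope ring_scope.

Lemma addF_S1 N (j f : 'I_N) : addF j (ordS f) = ordS (addF j f).
Proof. apply: val_inj => /=. by rewrite -[f.+1]addn1 -[((j+f) %% N).+1]addn1 modnDml modnDmr addnA. Qed.

Lemma addF_S2 N (j f : 'I_N) : addF (ordS j) f = ordS (addF j f).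
Proof. apply: val_inj => /=. by rewrite -[j.+1]addn1 -[((j+f) %% N).+1]addn1 !modnDml addnAC. Qed.

Lemma addF_SP N (j f : 'I_N) : addF (ordS j) (ord_pred f) = addF j f.
Proof.
apply: val_inj => /=. have N0 : (0 < N)%N by apply: leq_ltn_trans (ltn_ord j).
rewrite modnDml modnDmr.
have -> : (j.+1 + (f + N).-1 = (j + f) + N)%N by lia.
by rewrite modnDr.
Qed.

Lemma sum_ordS (R : ringType) N (g : 'I_N -> R) : \sum_j g (ordS j) = \sum_j g j.
Proof. by rewrite [RHS](reindex_inj (can_inj (@ordSK N))). Qed.

Lemma Delta_Acorr (R : fieldType) N (s : 'I_N -> R) f :
  Delta (Acorr s) f =
  - (\sum_j (s (ordS j) - s j) * (s (ordS (addF j f)) - s (addF j f))) / 4.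
Proof.
rewrite /Delta /Acorr; congr (_ / _).
have -> : \sum_j s j * s (addF j (ord_pred f)) = \sum_j s (ordS j) * s (addF j f).
  by rewrite -sum_ordS; apply: eq_bigr => j _; rewrite addF_SP.
have E : \sum_j s j * s (addF j f) = \sum_j s (ordS j) * s (ordS (addF j f)).
  by rewrite -sum_ordS; apply: eq_bigr => j _; rewrite addF_S2.
rewrite mulr2n mulrDl mul1r {1}E.
under [in RHS]eq_bigr => j _ do rewrite mulrBl !mulrBr.
rewrite !sumrB -sumrN.
have -> : \sum_j s j * s (addF j (ordS f)) = \sum_j s j * s (ordS (addF j f)).
  by apply: eq_bigr => j _; rewrite addF_S1.
rewrite sumrN; ring.
Qed.
Definition vv (R : ringType) (l : nat) : R := if odd l then 1 else -1.

Lemma nth_blocks (R : ringType) (m : nat -> nat) L s t :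
  (t < \sum_(s <= i < s + L) m i)%N ->
  nth 0 (flatten [seq nseq (m l) (vv R l) | l <- iota s L]) t =
  vv R s + \sum_(s <= l < s + L) (vv R l.+1 - vv R l) *
             ((\sum_(s <= i < l.+1) m i <= t)%N)%:R.
Proof.
elim: L s t => [|L IH] s t.
  by rewrite addn0 big_geq.
move=> ht.
rewrite /= nth_cat size_nseq.
case: ltnP => hts.
  rewrite nth_nseq hts (eq_big_nat _ _ (F2 := fun=> 0)) ?big1 ?addr0 // => l /andP [hl1 hl2].
  rewrite big_ltn ?ltnS // leqNgt (leq_trans hts) ?leq_addr //.
  by rewrite mulr0.
have ht' : (t - m s < \sum_(s.+1 <= i < s.+1 + L) m i)%N.
  move: ht; rewrite addnS big_ltn ?ltnS ?leq_addr // addSn. lia.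
rewrite IH // addnS big_ltn ?ltnS ?leq_addr // big_nat1 hts mulr1.
rewrite -addSn.
rewrite [in RHS](eq_big_nat _ _ (F2 := fun l => (vv R l.+1 - vv R l) *
             ((\sum_(s.+1 <= i < l.+1) m i <= t - m s)%N)%:R)).
  by rewrite addrA [vv R s + _]addrC subrK.
move=> l /andP [hl1 hl2].
rewrite (big_ltn (m := s)); last by rewrite ltnS ltnW.
by rewrite leq_subRL.
Qed.
Local Close Scope ring_scope.
Lemma mcyc_id k m i : (0 < i <= k.*2)%N -> mcyc k m i = m i.
Proof.
case/andP=> h1 h2; rewrite /mcyc modn_small ?prednK //.
Qed.

Lemma mcyc_per k m i : (0 < i)%N -> mcyc k m (i + k.*2) = mcyc k m i.
Proof.
move=> h; rewrite /mcyc.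
have -> : ((i + k.*2).-1 = i.-1 + k.*2)%N by lia.
by rewrite modnDr.
Qed.

Lemma msum_shift k m l r :
  (0 < l)%N -> msum k m (l + k.*2) r = msum k m l r.
Proof.
move=> hl; rewrite /msum -addnA [(k.*2 + r)%N]addnC addnA big_addn addnK.
by apply: eq_big_nat => i /andP [hi _]; rewrite mcyc_per // (leq_trans hl hi).
Qed.

Lemma msum_split k m l a b :
  msum k m l (a + b) = (msum k m l a + msum k m (l + a) b)%N.
Proof.
by rewrite /msum addnA (big_cat_nat _ (n := l + a)) ?leq_addr.
Qed.

Lemma msum_full k m : msum k m 1 k.*2 = (\sum_(1 <= l < k.*2.+1) m l)%N.
Proof.
rewrite /msum add1n; apply: eq_big_nat => i /andP [h1 h2].
by rewrite mcyc_id // h1 -ltnS.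
Qed.

Lemma msum_le k m a b : (a <= b)%N -> (msum k m 1 a <= msum k m 1 b)%N.
Proof.
move=> h; rewrite -(subnKC h) msum_split; exact: leq_addr.
Qed.
Lemma step_nat N p j : (0 < N)%N -> (p <= N)%N -> (j < N)%N ->
  ((p <= j) + (j == 0) = (j == p %% N) + (p <= (j + N.-1) %% N))%N.
Proof.
move=> N0 pN jN.
have Hb : ((j + N.-1) %% N = if j == 0 then N.-1 else j.-1)%N.
  case: eqP => [->|/eqP j0]; first by rewrite add0n modn_small // prednK.
  have -> : (j + N.-1 = j.-1 + N)%N by lia.
  by rewrite modnDr modn_small // (leq_ltn_trans (leq_pred j)).
have Hp : (p %% N = if p == N then 0 else p)%N.
  case: eqP => [->|/eqP pn]; first by rewrite modnn.
  by rewrite modn_small // ltn_neqAle pn pN.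
rewrite Hb Hp.
case: (j =P 0) => [->|/eqP j0]; case: (p =P N) => [->|/eqP pn] /=; lia.
Qed.
Local Open Scope ring_scope.

Lemma sum_sign (R : ringType) k : \sum_(1 <= l < k.*2.+1) (-1)^+l = 0 :> R.
Proof.
elim: k => [|k IH]; first by rewrite big_geq.
rewrite doubleS big_nat_recr // big_nat_recr //= IH add0r !exprS.
by rewrite mulN1r mulN1r opprK addNr.
Qed.

Lemma config_val (R : comRingType) N k m t :
  (\sum_(1 <= l < k.*2.+1) m l)%N = N -> (t < N)%N ->
  nth 0 (config_seq R k m) t =
  1 + \sum_(1 <= l < k.*2.+1) 2 * (-1)^+l * ((msum k m 1 l <= t)%N)%:R.
Proof.
move=> hN ht; rewrite /config_seq.
rewrite -[(fun l => nseq _ _)]/(fun l => nseq (m l) (vv R l)).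
rewrite nth_blocks; last by rewrite add1n hN.
rewrite add1n /vv /=; congr (_ + _); apply: eq_big_nat => l /andP [h1 h2].
have -> : msum k m 1 l = (\sum_(1 <= i < l.+1) m i)%N.
  rewrite /msum add1n; apply: eq_big_nat => i /andP [i1 i2].
  by rewrite mcyc_id // i1 -ltnS (leq_trans i2).
rewrite -signr_odd /=; case: (odd l) => /=; rewrite ?expr1 ?expr0; ring.
Qed.

Definition Ef (R : ringType) N k m (j : 'I_N) : R :=
  \sum_(1 <= l < k.*2.+1) (-1)^+l * delta R N (msum k m 1 l) j.

Lemma config_diff (R : comRingType) N k m (j : 'I_N) :
  (\sum_(1 <= l < k.*2.+1) m l)%N = N ->
  config R N k m (ordS j) - config R N k m j = 2 * Ef R k m j.
Proof.
move=> hN; have N0 : (0 < N)%N by apply: leq_ltn_trans (ltn_ord j).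
rewrite /config /=.
have -> : ((j.+1 %% N + N.-1) %% N = j)%N.
  rewrite modnDml; have -> : (j.+1 + N.-1 = j + N)%N by lia.
  by rewrite modnDr modn_small.
rewrite !(@config_val R N k m _ hN) // ?ltn_pmod //.
rewrite opprD addrACA subrr add0r -sumrB.
transitivity (\sum_(1 <= l < k.*2.+1) (2 * ((-1)^+l * delta R N (msum k m 1 l) j)
                 - 2 * (j == 0 :> nat)%:R * (-1)^+l)).
  apply: eq_big_nat => l /andP[h1 h2].
  have pN : (msum k m 1 l <= N)%N.
    by rewrite -hN -msum_full msum_le // -ltnS.
  have := step_nat N0 pN (ltn_ord j).
  move/(congr1 (fun n => n%:R : R)); rewrite !natrD => H.
  rewrite /delta -mulrBr; have -> : (((msum k m 1 l <= j)%N)%:R -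
    ((msum k m 1 l <= (j + N.-1) %% N)%N)%:R : R) =
     ((nat_of_ord j == msum k m 1 l %% N)%N)%:R - ((j == 0 :> nat))%:R.
    by apply/eqP; rewrite subr_eq addrAC -H addrK.
  by case: (nat_of_ord j == _) => /=; ring.
by rewrite big_split /= sumrN -!mulr_sumr sum_sign mulr0 oppr0 addr0.
Qed.

Lemma k_pos N k m : (0 < N)%N -> (\sum_(1 <= l < k.*2.+1) m l)%N = N -> (0 < k)%N.
Proof. move=> N0; case: k => // hN; by rewrite -hN big_geq in N0. Qed.

Lemma msum_per k m N l : (\sum_(1 <= l < k.*2.+1) m l)%N = N ->
  msum k m 1 (l + k.*2) = (N + msum k m 1 l)%N.
Proof.
move=> hN; rewrite addnC msum_split msum_full hN add1n.
by rewrite -[k.*2.+1]/(1 + k.*2)%N msum_shift.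
Qed.

Lemma delta_addN (R : ringType) N x (f : 'I_N) : delta R N (N + x) f = delta R N x f.
Proof. by rewrite /delta modnDl. Qed.

Lemma sign_per (R : ringType) k l : (-1) ^+ (l + k.*2) = (-1) ^+ l :> R.
Proof. by rewrite exprD -muln2 exprM sqrr_sign mulr1. Qed.

Lemma Ef_window (R : ringType) N k m (j : 'I_N) a :
  (\sum_(1 <= l < k.*2.+1) m l)%N = N ->
  Ef R k m j = \sum_(a.+1 <= l < a.+1 + k.*2) (-1)^+l * delta R N (msum k m 1 l) j.
Proof.
move=> hN; have N0 : (0 < N)%N by apply: leq_ltn_trans (ltn_ord j).
have k0 := k_pos N0 hN.
elim: a => [|a IH]; first by rewrite /Ef add1n.
rewrite IH big_ltn; last by rewrite -addn1 leq_add2l double_gt0.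
rewrite [(a.+2 + _)%N]addSn [in RHS]big_nat_recr /=; last by move: k0; lia.
rewrite (msum_per _ hN) delta_addN sign_per.
by rewrite addrC.
Qed.

Lemma sum_delta (R : ringType) N a c (f : 'I_N) : (0 < N)%N ->
  \sum_j delta R N a j * delta R N (a + c) (addF j f) = delta R N c f.
Proof.
move=> N0; rewrite (bigD1 (Ordinal (ltn_pmod a N0))) //= big1 ?addr0.
  rewrite {1}/delta /= eqxx mul1r /delta /= modnDml.
  by rewrite eqn_modDl (modn_small (ltn_ord f)).
move=> j hj; rewrite /delta.
case: eqP => [hj'|_]; last by rewrite mul0r.
by move: hj; rewrite -(inj_eq val_inj) /= hj' eqxx.
Qed.

Lemma corr_E (R : comRingType) N k m (f : 'I_N) :
  (\sum_(1 <= l < k.*2.+1) m l)%N = N ->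
  \sum_j Ef R k m j * Ef R k m (addF j f) =
  \sum_(1 <= l < k.*2.+1) \sum_(1 <= r < k.*2.+1)
     (-1)^+r * delta R N (msum k m l.+1 r) f.
Proof.
move=> hN; have N0 : (0 < N)%N by apply: leq_ltn_trans (ltn_ord f).
rewrite {1}/Ef.
under eq_bigr => j _ do rewrite mulr_suml.
rewrite exchange_big /=; apply: eq_big_nat => l /andP [l1 l2].
under eq_bigr => j _ do rewrite (@Ef_window R N k m (addF j f) l hN) -mulrA mulr_sumr.
rewrite -mulr_sumr exchange_big /= mulr_sumr.
rewrite -[l.+1]/(1 + l)%N big_addn.
have -> : (1 + l + k.*2 - l = k.*2.+1)%N by lia.
apply: eq_big_nat => r /andP [r1 r2].
under eq_bigr => j _ do rewrite mulrCA.
rewrite -mulr_sumr (addnC r l) msum_split sum_delta // add1n.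
by rewrite exprD !mulrA -expr2 sqrr_sign mul1r.
Qed.

Lemma pairing (R : ringType) k (g : nat -> R) :
  \sum_(1 <= n < k.+1) (g n.*2.-1 - g n.*2) =
  - \sum_(1 <= r < k.*2.+1) (-1)^+r * g r.
Proof.
elim: k => [|k IH]; first by rewrite !big_geq ?oppr0.
rewrite big_nat_recr //= IH doubleS [in RHS]big_nat_recr // [in RHS]big_nat_recr //=.
have h2 : (-1) ^+ k.*2 = 1 :> R by rewrite -muln2 exprM sqrr_sign.
rewrite !exprS h2 !mulr1 !mulN1r ?opprK ?mul1r.
by rewrite !opprD opprK addrA.
Qed.

Lemma shift_l (R : ringType) k (G : nat -> R) : (0 < k)%N ->
  G k.*2.+1 = G 1 ->
  \sum_(1 <= l < k.*2.+1) G l.+1 = \sum_(1 <= l < k.*2.+1) G l.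
Proof.
move=> k0 hG.
rewrite big_nat_recr /=; last by rewrite double_gt0.
rewrite [RHS]big_nat_recl /=; last by rewrite double_gt0.
by rewrite hG addrC.
Qed.

Unset Implicit Arguments.

Theorem mainTheorem9 (R : realFieldType) (N k : nat) (m : nat -> nat) :
  (0 < N)%N ->
  (\sum_(1 <= l < k.*2.+1) m l)%N = N ->
  forall f : 'I_N,
    Delta (Acorr (config R N k m)) f =
    \sum_(1 <= l < k.*2.+1) \sum_(1 <= n < k.+1)
       (delta R N (msum k m l (n.*2.-1)) f - delta R N (msum k m l n.*2) f).
Proof.
move=> N0 hN f.
rewrite Delta_Acorr.
under eq_bigr => j _ do rewrite !config_diff // mulrACA.
rewrite -mulr_sumr corr_E //.
under [RHS]eq_bigr => l _ do rewrite (pairing k (fun r => delta R N (msum k m l r) f)).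
rewrite sumrN mulNr; congr (- _).
have -> : (2 * 2 : R) = 4 by rewrite -natrM.
rewrite mulrAC mulfV ?mul1r; last by rewrite pnatr_eq0.
rewrite (@shift_l _ k (fun l => \sum_(1 <= r < k.*2.+1)
    (-1) ^+ r * delta R N (msum k m l r) f)) ?(k_pos N0 hN) //=.
apply: eq_big_nat => r _.
by rewrite -[k.*2.+1]/(1 + k.*2)%N msum_shift.
Qed.
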